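(* Assume $(q+1)/d=3$, let $r$ be an integer, $a,b\in\mathbb F_{q^2}^*$, $0\le j_1,j_2<d$, and put $h(X)=1+aX^{1+3j_1}+bX^{2+3j_2}$ and $L_k(X)=1+a\epsilon^{j_1k}X+b\epsilon^{j_2k}X^2$ for $0\le k<d$. Suppose that for every $0\le k<d$ there exist $\tau_k\in\{0,1,2\}$ and $\lambda_k\in\mu_{q+1}$ with $L_k\in\mathcal L_k(2,\tau_k;\lambda_k)$, and that $\gcd(e_k,3)=1$ where $e_k=r-2+\tau_k$. Define $\pi(k)\in\mathbb Z/d\mathbb Z$ by $\lambda_k^3=\epsilon^{\pi(k)}$, and $K_0=\{k:\tau_k=0\}$, $K_1=\{k:\tau_k=2\}$. If $K_0\neq\emptyset$ and $K_1\ne\emptyset$, then $r\equiv1\pmod3$, $d$ is even, $K_0$ and $K_1$ are the two cosets of $2\mathbb Z/d\mathbb Z$ in $\mathbb Z/d\mathbb Z$, $a^3=-1$, $b=\pm a^2$, $2j_1-j_2\equiv d/2\pmod d$, $j_1+j_2+1\equiv d/2\pmod d$, and $\pi(k)+e_kk=rk$ in $\mathbb Z/d\mathbb Z$ for all $k$. Moreover, either $q\equiv11\pmod{18}$ and $h(X)=1+aX^{(q+1)/3}+bX^{(q+1)/6}$, or $q\equiv5\pmod{18}$ and $h(X)=1+aX^{2(q+1)/3}+bX^{5(q+1)/6}$.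
   Context: $q$ is a prime power, $d$ is a positive divisor of $q+1$, and $\epsilon\in\mathbb F_{q^2}^*$ has multiplicative order $d$. $\mu_{q+1}$ is the subgroup of order $q+1$ of $\mathbb F_{q^2}^*$. For $a\in\mathbb F_{q^2}$, $\bar a=a^q$; for $f(X)=\sum_{i=0}^n a_iX^i\in\mathbb F_{q^2}[X]$ with $a_n\neq0$, $\tilde f(X)=\sum_{i=0}^n\bar a_iX^{n-i}$. For $0\le k<d$, $0\le t<(q+1)/d$ and $\lambda\in\mu_{q+1}$: $\mathcal L_k(t,0;\lambda)$ is the set of $L\in\mathbb F_{q^2}[X]$ with $\deg L=t$, $\tilde L=\lambda L$ and $\gcd(L,X^{(q+1)/d}-\epsilon^k)=1$; for an integer $\tau$ with $(q+1)/d-t\le\tau\le t$, $\mathcal L_k(t,\tau;\lambda)$ is the set of $L=P+X^{(q+1)/d-\tau}Q$ with $P,Q\in\mathbb F_{q^2}[X]$, $\deg P=t-\tau$, $\tilde P=\lambda P$, $\deg Q=\tau+t-(q+1)/d$, $\tilde Q=\lambda\epsilon^kQ$, and $\gcd(L,X^{(q+1)/d}-\epsilon^k)=1$. *)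

(* Defs.v *)
From HB Require Import structures.
From mathcomp Require Import all_boot all_order all_algebra all_field.
Set Implicit Arguments. Unset Strict Implicit. Unset Printing Implicit Defensive.
Import GRing.Theory.
Local Open Scope ring_scope.

(* F plays the role of F_{q^2}; conjugation is a |-> a^q. *)
Definition conjq (F : finFieldType) (q : nat) (a : F) : F := a ^+ q.

Definition tildep (F : finFieldType) (q : nat) (f : {poly F}) : {poly F} :=
  \poly_(i < size f) conjq q f`_((size f).-1 - i).

Definition in_mu (F : finFieldType) (q : nat) (x : F) : Prop := x ^+ q.+1 = 1.

Definition calL (F : finFieldType) (q d : nat) (eps : F) (k t tau : nat)
    (lam : F) (L : {poly F}) : Prop :=
  let m := (q.+1 %/ d)%N in
  coprimep L ('X^m - (eps ^+ k)%:P) /\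
  if tau == 0%N then
    size L = t.+1 /\ tildep q L = lam *: L
  else
    [/\ (m - t <= tau <= t)%N &
      exists P Q : {poly F},
        [/\ size P = (t - tau).+1, tildep q P = lam *: P,
            size Q = (tau + t - m).+1, tildep q Q = (lam * eps ^+ k) *: Q &
            L = P + 'X^(m - tau) * Q]].

(* Main.v *)
Require Import Defs.
From HB Require Import structures.
From mathcomp Require Import all_boot all_order all_algebra all_field.
From mathcomp Require Import zify ring cyclic.
Import GRing.Theory.
Local Open Scope ring_scope.
Lemma cop3 (x : int) : coprimez x 3 -> (x %% 3 != 0)%Z.
Proof.
move=> H; apply/negP => /eqP H0.
have E : x = (x %/ 3)%Z * 3 by rewrite {1}(divz_eq x 3) H0 addr0.
by move: H; rewrite E coprimezMl andbF.
Qed.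

Section Poly.
Variables (F : finFieldType) (q : nat).

Lemma conjq1 : conjq q (1 : F) = 1.
Proof. by rewrite /conjq expr1n. Qed.

Lemma quad_coef (A B : F) (i : nat) :
  (1 + A *: 'X + B *: 'X^2 : {poly F})`_i =
  if i == 0%N then 1 else if i == 1%N then A else if i == 2%N then B else 0.
Proof.
rewrite !coefD !coefZ coef1 coefX coefXn.
by case: i => [|[|[|i]]] /=; rewrite ?mulr0 ?mulr1 ?addr0 ?add0r.
Qed.
Lemma quad_size (A B : F) : B != 0 ->
  size (1 + A *: 'X + B *: 'X^2 : {poly F}) = 3%N.
Proof.
move=> HB; apply/anti_leq/andP; split.
  apply/leq_sizeP => j Hj; rewrite quad_coef.
  by case: j Hj => [|[|[|j]]].
rewrite ltnNge; apply/negP => /leq_sizeP H.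
by move: (H 2%N (leqnn 2)); rewrite quad_coef /= => /eqP; rewrite (negbTE HB).
Qed.

Lemma quad_tau0 (A B lam : F) : B != 0 ->
  tildep q (1 + A *: 'X + B *: 'X^2) = lam *: (1 + A *: 'X + B *: 'X^2) ->
  [/\ B ^+ q = lam, A ^+ q = lam * A & 1 = lam * B].
Proof.
move=> HB H; have C i := congr1 (fun p : {poly F} => p`_i) H.
move: (C 0%N) (C 1%N) (C 2%N).
rewrite /tildep !coef_poly quad_size // !coefZ !quad_coef /conjq /=.
by rewrite expr1n mulr1 => -> -> ->.
Qed.

Lemma quad_tau2 (A B lam e : F) (P Q : {poly F}) :
  size P = 1%N -> tildep q P = lam *: P -> size Q = 2%N ->
  tildep q Q = (lam * e) *: Q -> 1 + A *: 'X + B *: 'X^2 = P + 'X^1 * Q ->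
  [/\ lam = 1, B ^+ q = e * A & A ^+ q = e * B].
Proof.
move=> sP HP sQ HQ HL.
have C i := congr1 (fun p : {poly F} => p`_i) HL.
have P1 : forall i, (0 < i)%N -> P`_i = 0.
  by move=> i Hi; move/leq_sizeP: (eq_leq sP); apply.
move: (C 0%N) (C 1%N) (C 2%N); rewrite !quad_coef !coefD !coefXnM /=.
rewrite addr0 (P1 1%N) // (P1 2%N) // !add0r /= subn1 /= => P0 QA QB.
have CP := congr1 (fun p : {poly F} => p`_0) HP.
have CQ i := congr1 (fun p : {poly F} => p`_i) HQ.
move: CP (CQ 0%N) (CQ 1%N); rewrite /tildep !coef_poly sP sQ !coefZ /conjq /=.
rewrite !subn0 subnn -P0 expr1n mulr1 => <-; rewrite !mul1r.
have E21 : (2 - 1 = 1)%N by []. rewrite E21 in QB.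
by rewrite -QA -QB => -> ->.
Qed.
End Poly.

Lemma exists_omega (F : finFieldType) : (3 %| #|F|.-1)%N ->
  exists w : F, 3.-primitive_root w.
Proof.
move=> H3.
set n := #|F|.-1.
have cF : #|F| = n.+1.
  rewrite /n prednK // (cardD1 (0 : F)) //.
have n_gt0 : (0 < n)%N.
  rewrite /n -(cardC1 (0 : F)); apply/card_gt0P; exists 1; by rewrite !inE oner_neq0.
have : has n.-primitive_root (enum (predC1 (0 : F))).
  apply: has_prim_root => //.
  - apply/allP => x; rewrite mem_enum /= => Hx.
    rewrite unity_rootE; apply/eqP; apply: (mulIf Hx); rewrite mul1r -exprSr -cF.
    exact: expf_card.
  - exact: enum_uniq.
  - by rewrite -cardE cardC1.
case/hasP => z _ Hz; exists (z ^+ (n %/ 3)); exact: dvdn_prim_root.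
Qed.

Lemma horner_quad (F : fieldType) (A B x : F) :
  (1 + A *: 'X + B *: 'X^2 : {poly F}).[x] = 1 + A * x + B * x ^+ 2.
Proof. by rewrite !hornerD !hornerZ hornerX hornerXn hornerC. Qed.

Lemma horner_cub (F : fieldType) (c x : F) :
  ('X^3 - c%:P : {poly F}).[x] = x ^+ 3 - c.
Proof. by rewrite hornerD hornerN hornerXn hornerC. Qed.

Lemma arith_odd (k0 d : nat) : (d %% 2 = 1)%N -> (k0 + 2 * (d %/ 2).+1 = (k0 + 1) + d)%N.
Proof. lia. Qed.

Lemma arith_even (d : nat) : ~~ odd d -> d = (2 * (d %/ 2))%N.
Proof. move=> H; have := modn2 d; rewrite (negbTE H) /= => H2; lia. Qed.

Lemma arith_r (r : int) : (r %% 3 = 1)%Z -> (r = 1 %[mod 3])%Z.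
Proof. lia. Qed.

Lemma cong_a (j1 j2 d t : nat) : d = (2 * t)%N ->
  (j2 %% d = (t + 2 * j1) %% d)%N -> ((2 * j1)%N%:Z - j2%:Z = t %[mod d])%Z.
Proof.
move=> Hd H; apply/eqP; rewrite eqz_mod_dvd; apply/dvdzP.
move: (divn_eq j2 d) (divn_eq (t + 2 * j1) d); rewrite H.
move: (j2 %/ d)%N ((t + 2 * j1) %/ d)%N ((t + 2 * j1) %% d)%N => Q2 Q1 R E2 E1.
exists (Q1%:Z - Q2%:Z - 1); lia.
Qed.

Lemma cong_pi0 (pik k d : nat) (r : int) : (pik %% d = (2 * k) %% d)%N ->
  (pik%:Z + (r - 2 + (0%N)%:Z) * k%:Z = r * k%:Z %[mod d])%Z.
Proof.
move=> H; apply/eqP; rewrite eqz_mod_dvd.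
have -> : pik%:Z + (r - 2 + (0%N)%:Z) * k%:Z - r * k%:Z = pik%:Z - (2 * k)%N%:Z.
  by rewrite PoszM; ring.
by rewrite -eqz_mod_dvd !modz_nat H.
Qed.

Lemma cong_pi2 (pik k d : nat) (r : int) : (d %| pik)%N ->
  (pik%:Z + (r - 2 + (2%N)%:Z) * k%:Z = r * k%:Z %[mod d])%Z.
Proof.
move=> H; apply/eqP; rewrite eqz_mod_dvd.
have -> : pik%:Z + (r - 2 + (2%N)%:Z) * k%:Z - r * k%:Z = pik%:Z by ring.
by rewrite dvdzE !absz_nat.
Qed.

Lemma arith_h (q d t j1 j2 : nat) : q.+1 = (3 * d)%N -> d = (2 * t)%N -> (0 < t)%N ->
  (j1 < d)%N -> (j2 < d)%N ->
  (j2 %% d = (t + 2 * j1) %% d)%N -> ((j1 + j2 + 1) %% d = t %% d)%N ->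
  ((q %% 18 = 11)%N /\ (1 + 3 * j1 = q.+1 %/ 3)%N /\ (2 + 3 * j2 = q.+1 %/ 6)%N) \/
  ((q %% 18 = 5)%N /\ (1 + 3 * j1 = (2 * q.+1) %/ 3)%N /\ (2 + 3 * j2 = (5 * q.+1) %/ 6)%N).
Proof.
move=> Hq Hd Ht H1 H2 C1 C2.
have dp : (0 < d)%N by lia.
rewrite (modn_small H2) in C1.
have tl : (t < d)%N by lia.
rewrite (modn_small tl) in C2.
have b1 : ((t + 2 * j1) %/ d < 3)%N by rewrite ltn_divLR //; lia.
have b2 : ((j1 + j2 + 1) %/ d < 2)%N by rewrite ltn_divLR //; lia.
move: (divn_eq (t + 2 * j1) d) (divn_eq (j1 + j2 + 1) d); rewrite -C1 C2.
move: ((t + 2 * j1) %/ d)%N ((j1 + j2 + 1) %/ d)%N b1 b2 => [|[|[|x]]] [|[|y]] //= _ _;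
  rewrite ?mul0n ?mul1n; lia.
Qed.

Lemma sign_eq (F : fieldType) (b1 b2 : bool) : (-1 : F) != 1 ->
  ((-1 : F) ^+ b1 == (-1) ^+ b2) = (b2 == b1).
Proof.
move=> H; case: b1; case: b2; rewrite ?expr1 ?expr0 ?eqxx //.
  by rewrite (negbTE H).
by rewrite eq_sym (negbTE H).
Qed.
Theorem lemma4p8 (F : finFieldType) (p n q d : nat) (eps : F)
  (r : int) (a b : F) (j1 j2 : nat) (tau : nat -> nat) (lam : nat -> F) :
  prime p -> (0 < n)%N -> q = (p ^ n)%N -> #|F| = (q ^ 2)%N ->
  (d %| q.+1)%N -> d.-primitive_root eps ->
  (q.+1 %/ d = 3)%N ->
  a != 0 -> b != 0 -> (j1 < d)%N -> (j2 < d)%N ->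
  let h : {poly F} := 1 + a *: 'X^(1 + 3 * j1) + b *: 'X^(2 + 3 * j2) in
  let Lk (k : nat) : {poly F} :=
    1 + (a * eps ^+ (j1 * k)) *: 'X + (b * eps ^+ (j2 * k)) *: 'X^2 in
  let e (k : nat) : int := r - 2 + (tau k)%:Z in
  (forall k, (k < d)%N ->
     [/\ (tau k <= 2)%N, in_mu q (lam k),
         calL q d eps k 2 (tau k) (lam k) (Lk k) & coprimez (e k) 3]) ->
  (exists2 k, (k < d)%N & tau k = 0%N) ->
  (exists2 k, (k < d)%N & tau k = 2%N) ->
  [/\ (r = 1 %[mod 3])%Z, ~~ odd d,
      (forall k, (k < d)%N -> (tau k = 0%N <-> ~~ odd k) /\ (tau k = 2%N <-> odd k))
      \/ (forall k, (k < d)%N -> (tau k = 0%N <-> odd k) /\ (tau k = 2%N <-> ~~ odd k)),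
      a ^+ 3 = -1 & b = a ^+ 2 \/ b = - a ^+ 2] /\
  [/\ ((2 * j1)%:Z - j2%:Z = (d %/ 2)%N %[mod d])%Z,
      ((j1 + j2 + 1)%N = (d %/ 2)%N %[mod d])%Z &
      forall k pik, (k < d)%N -> lam k ^+ 3 = eps ^+ pik ->
        (pik%:Z + e k * k%:Z = r * k%:Z %[mod d])%Z] /\
  ((q %% 18 = 11)%N /\ h = 1 + a *: 'X^(q.+1 %/ 3) + b *: 'X^(q.+1 %/ 6)
   \/ (q %% 18 = 5)%N /\ h = 1 + a *: 'X^((2 * q.+1) %/ 3) + b *: 'X^((5 * q.+1) %/ 6)).
Proof.
move=> Hp Hn Hq HF Hdq Heps Hm Ha Hb Hj1 Hj2 h Lk e Hall [k0 Hk0 T0] [k2 Hk2 T2].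
have d_gt0 : (0 < d)%N by move: Hm; case: (d) => //; rewrite divn0.
have Hqd : q.+1 = (3 * d)%N by rewrite -Hm divnK.
have eps1 : eps ^+ q.+1 = 1 by apply/eqP; rewrite -(prim_order_dvd Heps).
have epsd : eps ^+ d = 1 := prim_expr_order Heps.
have eps0 : eps != 0 by rewrite (prim_root_eq0 Heps) -lt0n.
have Hr : (r %% 3 = 1)%Z.
  have [_ _ _ C0] := Hall k0 Hk0; have [_ _ _ C2] := Hall k2 Hk2.
  move: C0 C2; rewrite /e T0 T2 => /cop3 C0 /cop3 C2; lia.
have Htau : forall k, (k < d)%N -> tau k = 0%N \/ tau k = 2%N.
  move=> k Hk; have [T _ _ C] := Hall k Hk; move: C; rewrite /e => /cop3 C.
  move: T C; case: (tau k) => [|[|[|]]] //; try by left.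
  - move=> _; lia.
  - by right.
pose A k := a * eps ^+ (j1 * k).
pose B k := b * eps ^+ (j2 * k).
have A0 : forall k, A k != 0 by move=> k; rewrite mulf_neq0 // expf_neq0.
have B0 : forall k, B k != 0 by move=> k; rewrite mulf_neq0 // expf_neq0.
have Hcop : forall k, (k < d)%N -> coprimep (Lk k) ('X^3 - (eps ^+ k)%:P).
  by move=> k Hk; have [_ _ [C _] _] := Hall k Hk; move: C; rewrite Hm.
have H0 : forall k, (k < d)%N -> tau k = 0%N ->
    [/\ B k ^+ q = lam k, A k ^+ q = lam k * A k & 1 = lam k * B k].
  move=> k Hk Tk; have [_ _ [_ C] _] := Hall k Hk; move: C; rewrite Tk /= => -[_ C].
  exact: quad_tau0 (B0 k) C.
have H2 : forall k, (k < d)%N -> tau k = 2%N ->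
    [/\ lam k = 1, B k ^+ q = eps ^+ k * A k & A k ^+ q = eps ^+ k * B k].
  move=> k Hk Tk; have [_ _ [_ C] _] := Hall k Hk; move: C; rewrite Tk /= Hm.
  move=> [_ [P [Q [sP HP sQ HQ HL]]]].
  have E1 : (3 - 2 = 1)%N by []. rewrite E1 in HL.
  have := @quad_tau2 F q (A k) (B k) (lam k) (eps ^+ k) P Q sP HP sQ HQ HL. by [].
have powq : forall c j k, (c * eps ^+ (j * k)) ^+ q.+1 = c ^+ q.+1.
  by move=> c j k; rewrite exprMn -exprM mulnC exprM eps1 expr1n mulr1.
have Hbq : b ^+ q.+1 = 1.
  have [C1 _ C3] := H0 k0 Hk0 T0.
  by rewrite -(powq b j2 k0) exprSr C1 -C3.
have Haq : a ^+ q.+1 = 1.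
  have [_ C2 _] := H2 k2 Hk2 T2.
  have : (B k2 ^+ q) ^+ q.+1 = 1 by rewrite -exprM mulnC exprM powq Hbq expr1n.
  by rewrite C2 exprMn -exprM mulnC exprM eps1 expr1n mul1r powq.
have Aq : forall k, A k ^+ q * A k = 1 by move=> k; rewrite -exprSr powq Haq.
have Bq : forall k, B k ^+ q * B k = 1 by move=> k; rewrite -exprSr powq Hbq.
have P0f : forall k, (k < d)%N -> tau k = 0%N -> B k = A k ^+ 2.
  move=> k Hk Tk; have [C1 C2 C3] := H0 k Hk Tk.
  have L0 : lam k != 0.
    by apply/eqP => L; move: C3; rewrite L mul0r => /eqP; rewrite oner_eq0.
  apply: (mulfI L0); by rewrite -C3 -(Aq k) C2 -mulrA -expr2.
have P1f : forall k, (k < d)%N -> tau k = 2%N -> A k * B k * eps ^+ k = 1.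
  move=> k Hk Tk; have [_ C2 _] := H2 k Hk Tk.
  rewrite -(Bq k) C2; ring.
have H3 : (3 %| #|F|.-1)%N.
  have -> : (#|F|.-1 = 3 * (d * q.-1))%N.
    rewrite HF mulnA -Hqd; case: (q) => [|q'] //=; nia.
  exact: dvdn_mulr.
have [w Hw] := @exists_omega F H3.
have w3 : w ^+ 3 = 1 := prim_expr_order Hw.
have w1 : 1 + w + w ^+ 2 = 0.
  have wn1 : w - 1 != 0.
    rewrite subr_eq0; apply/eqP => E; move: (prim_order_dvd Hw 1).
    by rewrite E expr1 eqxx.
  apply/eqP; rewrite -(mulrI_eq0 _ (mulfI wn1)).
  have -> : (w - 1) * (1 + w + w ^+ 2) = w ^+ 3 - 1 by ring.
  by rewrite w3 subrr.
have HX : forall k, (k < d)%N -> B k = A k ^+ 2 -> A k * B k * eps ^+ k = 1 -> False.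
  move=> k Hk E1 E2.
  pose x := w / A k.
  have Ax : A k * x = w by rewrite /x mulrC divfK.
  have := coprimep_root (Hcop k Hk) (x := x).
  have -> : root (Lk k) x.
    apply/eqP; rewrite /Lk horner_quad -/(A k) -/(B k) E1 Ax.
    by rewrite -exprMn Ax.
  move=> /(_ isT); rewrite horner_cub; apply/negP; rewrite negbK subr_eq0.
  have A3 : A k ^+ 3 != 0 by rewrite expf_neq0.
  apply/eqP; apply: (mulfI A3).
  rewrite -exprMn Ax w3 -E2 E1; ring.
pose u := eps ^+ j2. pose v := eps ^+ j1. pose z := eps ^+ (j1 + j2 + 1).
have Bk_eq : forall k, B k = b * u ^+ k by move=> k; rewrite /B exprM.
have Ak2_eq : forall k, A k ^+ 2 = a ^+ 2 * (v ^+ 2) ^+ k.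
  by move=> k; rewrite /A exprMn /v -!exprM -mulnA (mulnC k).
have ABe_eq : forall k, A k * B k * eps ^+ k = a * b * z ^+ k.
  move=> k; have -> : z ^+ k = eps ^+ (j1 * k) * eps ^+ (j2 * k) * eps ^+ k.
    by rewrite /z -exprM !mulnDl mul1n !exprD.
  rewrite /A /B; ring.
have ud : u ^+ d = 1 by rewrite /u -exprM mulnC exprM epsd expr1n.
have vd : v ^+ d = 1 by rewrite /v -exprM mulnC exprM epsd expr1n.
have v2d : (v ^+ 2) ^+ d = 1 by rewrite exprAC vd expr1n.
have zd : z ^+ d = 1 by rewrite /z -exprM mulnC exprM epsd expr1n.
have u0 : u != 0 by rewrite expf_neq0.
have v0 : v != 0 by rewrite expf_neq0.
pose P0 k := b * u ^+ k == a ^+ 2 * (v ^+ 2) ^+ k.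
pose P1 k := a * b * z ^+ k == 1.
have P0mod : forall k, P0 k = P0 (k %% d)%N.
  by move=> k; rewrite /P0 (expr_mod k ud) (expr_mod k v2d).
have P1mod : forall k, P1 k = P1 (k %% d)%N.
  by move=> k; rewrite /P1 (expr_mod k zd).
have P0t : forall k, (k < d)%N -> tau k = 0%N -> P0 k.
  by move=> k Hk Tk; rewrite /P0 -Bk_eq -Ak2_eq (P0f k Hk Tk).
have P1t : forall k, (k < d)%N -> tau k = 2%N -> P1 k.
  by move=> k Hk Tk; rewrite /P1 -ABe_eq (P1f k Hk Tk).
have PX : forall k, (k < d)%N -> P0 k -> P1 k -> False.
  move=> k Hk; rewrite /P0 /P1 -Bk_eq -Ak2_eq -ABe_eq => /eqP E1 /eqP E2.
  exact: (HX k Hk E1 E2).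
have Hx : forall k, P0 k = ~~ P1 k.
  move=> k; rewrite P0mod P1mod; have Hk := ltn_pmod k d_gt0.
  case: (Htau _ Hk) => Tk.
  - rewrite P0t //; apply/esym/negP => H; exact: (PX _ Hk (P0t _ Hk Tk) H).
  - rewrite P1t //; apply/negP => H; exact: (PX _ Hk H (P1t _ Hk Tk)).
have P0k0 : P0 k0 := P0t _ Hk0 T0.
have P1k2 : P1 k2 := P1t _ Hk2 T2.
have NC0 : u != v ^+ 2.
  apply/negP => /eqP E.
  have Pb : forall k, P0 k = (b == a ^+ 2).
    by move=> k; rewrite /P0 -E (inj_eq (mulIf _)) // expf_neq0.
  by move: (Hx k2); rewrite Pb -(Pb k0) P0k0 P1k2.
have NC1 : z != 1.
  apply/negP => /eqP E.
  have Pb : forall k, P1 k = (a * b == 1) by move=> k; rewrite /P1 E expr1n mulr1.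
  by move: (Hx k0); rewrite P0k0 Pb -(Pb k2) P1k2.
have a2v0 : forall k, a ^+ 2 * (v ^+ 2) ^+ k != 0.
  by move=> k; rewrite mulf_neq0 // expf_neq0 // expf_neq0.
have step01 : forall k, P0 k -> P1 k.+1.
  move=> k H; apply/negPn/negP; rewrite -Hx => H'.
  move: H'; rewrite /P0 (exprSr u) (exprSr (v ^+ 2)) mulrA (eqP H) mulrA.
  by rewrite (inj_eq (mulfI (a2v0 k))) (negbTE NC0).
have step10 : forall k, P1 k -> P0 k.+1.
  move=> k H; rewrite Hx; apply/negP => H'.
  move: H'; rewrite /P1 exprSr mulrA (eqP H) mul1r.
  by rewrite (negbTE NC1).
have step00 : forall k, P0 k -> P0 k.+2 by move=> k /step01 /step10.
have step11 : forall k, P1 k -> P1 k.+2 by move=> k /step10 /step01.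
have d_even : ~~ odd d.
  apply/negP => Hodd.
  have Hm2 : forall m, P0 (k0 + 2 * m)%N.
    elim=> [|m IH]; first by rewrite muln0 addn0.
    by rewrite mulnS addnCA add2n; apply: step00.
  move: (Hm2 (d %/ 2).+1); rewrite P0mod.
  have -> : (k0 + 2 * (d %/ 2).+1 = (k0 + 1) + d)%N.
    by apply: arith_odd; rewrite modn2 Hodd.
  rewrite modnDr -P0mod Hx addn1 step01 //.
pose t := (d %/ 2)%N.
have Hdt : d = (2 * t)%N := @arith_even d d_even.
have t_gt0 : (0 < t)%N by move: d_gt0; rewrite Hdt muln_gt0 => /andP[].
have t_ltd : (t < d)%N by rewrite [X in (_ < X)%N]Hdt mul2n -addnn -[X in (X < _)%N](addn0 t) ltn_add2l.
have epsn1 : eps ^+ t != 1.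
  by rewrite -(prim_order_dvd Heps) gtnNdvd.
have epst : eps ^+ t = -1.
  have E : (eps ^+ t) ^+ 2 = 1 by rewrite -exprM mulnC -Hdt epsd.
  move/eqP: E; rewrite sqrf_eq1 (negbTE epsn1) /=; exact/eqP.
have m1n1 : (-1 : F) != 1 by rewrite -epst.
have Hu : u = - v ^+ 2.
  have E2 := eqP (step00 _ P0k0).
  move: E2; rewrite -addn2 (exprD u) (exprD (v ^+ 2)) mulrA (eqP P0k0) [RHS]mulrA.
  move=> E0; have E := mulfI (a2v0 k0) E0.
  have : (u - v ^+ 2) * (u + v ^+ 2) == 0.
    by rewrite (_ : (u - v ^+ 2) * (u + v ^+ 2) = u ^+ 2 - (v ^+ 2) ^+ 2); [rewrite E subrr | ring].
  by rewrite mulf_eq0 subr_eq0 (negbTE NC0) /= addr_eq0 => /eqP.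
have Hz : z = -1.
  have E1 := eqP (step01 _ P0k0).
  have E3 := eqP (step11 _ (step01 _ P0k0)).
  move: E3; rewrite -(addn2 k0.+1) exprD mulrA E1 mul1r => /eqP.
  by rewrite sqrf_eq1 (negbTE NC1) => /eqP.
have Cu : (j2 == t + 2 * j1 %[mod d])%N.
  by rewrite -(eq_prim_root_expr Heps) exprD epst mulnC exprM -/v -/u Hu mulN1r.
have Cz : (j1 + j2 + 1 == t %[mod d])%N.
  by rewrite -(eq_prim_root_expr Heps) -/z Hz epst.
have P0sign : forall k, P0 k = (b == a ^+ 2 * (-1) ^+ k).
  move=> k; rewrite /P0 -[v ^+ 2]opprK -Hu (exprNn u) mulrA.
  by rewrite (inj_eq (mulIf _)) // expf_neq0.
have bsign : b = a ^+ 2 * (-1) ^+ k0 by apply/eqP; rewrite -P0sign.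
have Hpar : forall k, P0 k = (odd k == odd k0).
  move=> k; rewrite P0sign bsign (inj_eq (mulfI _)) ?expf_neq0 //.
  by rewrite -(signr_odd _ k) -(signr_odd _ k0) sign_eq.
have a3 : a ^+ 3 = -1.
  have E := eqP (step01 _ P0k0).
  rewrite /P1 Hz bsign (exprSr (-1) k0) in E.
  have ss : (-1) ^+ k0 * (-1) ^+ k0 = 1 :> F by rewrite -exprMn mulrNN mulr1 expr1n.
  have E' : a ^+ 3 * -1 = 1.
    apply: (etrans _ E).
    transitivity (a ^+ 3 * ((-1) ^+ k0 * (-1) ^+ k0) * -1); first by rewrite ss mulr1.
    ring.
  have -> : a ^+ 3 = (a ^+ 3 * -1) * -1 by ring.
  by rewrite E' mul1r.
have P0tau : forall k, (k < d)%N -> (tau k = 0%N <-> P0 k).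
  move=> k Hk; split; first exact: P0t.
  move=> H; case: (Htau k Hk) => // T2'; exfalso; exact: (PX k Hk H (P1t k Hk T2')).
have P2tau : forall k, (k < d)%N -> (tau k = 2%N <-> ~~ P0 k).
  move=> k Hk; split; first by move=> T; rewrite Hx negbK; exact: P1t.
  move=> H; case: (Htau k Hk) => // T0'; by rewrite (P0t k Hk T0') in H.
split; [split|split; [split|]].
- exact: arith_r.
- exact: d_even.
- case E0: (odd k0); [right|left] => k Hk;
    (split; [apply: iff_trans (P0tau k Hk) _ | apply: iff_trans (P2tau k Hk) _]);
    rewrite Hpar E0; by case: (odd k); split.
- exact: a3.
- move: bsign; rewrite -(signr_odd _ k0); case: (odd k0) => ->; [right|left];
    by rewrite ?expr1 ?expr0 ?mulr1 ?mulrN1.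
- exact: cong_a Hdt (eqP Cu).
- by rewrite !modz_nat (eqP Cz).
- move=> k pik Hk Hl; case: (Htau k Hk) => Tk; rewrite /e Tk.
  + apply: cong_pi0; apply/eqP; rewrite -(eq_prim_root_expr Heps) -Hl.
    have [C1 _ C3] := H0 k Hk Tk.
    have zuv : v * u * eps = -1 by rewrite -Hz /z !exprD expr1.
    have v3e : v ^+ 3 * eps = 1.
      apply: oppr_inj; rewrite -zuv Hu; ring.
    have Hvw : (v ^+ k) ^+ 3 * eps ^+ k = 1 by rewrite exprAC -exprMn v3e expr1n.
    have key : eps ^+ (2 * k) * B k ^+ 3 = 1.
      rewrite (P0f k Hk Tk) Ak2_eq exprAC mulnC exprM.
      have -> : (eps ^+ k) ^+ 2 * (a ^+ 2 * (v ^+ k) ^+ 2) ^+ 3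
              = (a ^+ 3) ^+ 2 * ((v ^+ k) ^+ 3 * eps ^+ k) ^+ 2 by ring.
      rewrite a3 Hvw; ring.
    have B3 : B k ^+ 3 != 0 by rewrite expf_neq0.
    apply/eqP; apply: (mulIf B3); rewrite key -exprMn -C3; ring.
  + apply: cong_pi2; rewrite (prim_order_dvd Heps) -Hl.
    by have [-> _ _] := H2 k Hk Tk; rewrite expr1n.
- have [[Hq18 [E1 E2]] | [Hq18 [E1 E2]]] :=
    @arith_h q d t j1 j2 Hqd Hdt t_gt0 Hj1 Hj2 (eqP Cu) (eqP Cz); [left|right];
    by split => //; rewrite /h E1 E2.
Qed.
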